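(* The graph parameters $\widetilde{\Delta}$ and $\max\{\mathsf{cideg},\widetilde{\omega}\}$ are equivalent, i.e. there exist functions $f,g\colon\mathbb{N}\to\mathbb{N}$ such that for every finite graph $G$, $\widetilde{\Delta}(G)\le f(\max\{\mathsf{cideg}(G),\widetilde{\omega}(G)\})$ and $\max\{\mathsf{cideg}(G),\widetilde{\omega}(G)\}\le g(\widetilde{\Delta}(G))$.
   Context: Two vertices of $G$ are equivalent if they lie in exactly the same maximal cliques of $G$. The clique-quotient graph $\widetilde{G}$ has the equivalence classes as vertices, two distinct classes being adjacent iff some (equivalently every) pair of representatives is adjacent in $G$. $\widetilde{\Delta}(G)$ is the maximum degree of $\widetilde{G}$. $\widetilde{\omega}(G)$ is the maximum over maximal cliques $K$ of the number of equivalence classes meeting $K$; $\mathsf{cideg}(G)$ is the maximum over vertices $v$ of the number of maximal cliques containing $v$. *)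

(* Defs.v *)
From mathcomp Require Import all_boot.
Set Implicit Arguments. Unset Strict Implicit. Unset Printing Implicit Defensive.

(* A finite simple graph is given by a vertex type T : finType and an
   adjacency relation e : rel T, assumed symmetric and irreflexive
   (these hypotheses appear in the theorem). *)
Section CliqueQuotient.
Variables (T : finType) (e : rel T).

Definition is_clique (K : {set T}) : bool :=
  [forall x in K, forall y in K, (x != y) ==> e x y].

Definition is_maxclique (K : {set T}) : bool := maxset is_clique K.

Definition cq_equiv (x y : T) : bool :=
  [forall K : {set T}, is_maxclique K ==> ((x \in K) == (y \in K))].

Definition cq_class (v : T) : {set T} := [set u | cq_equiv u v].

Definition cq_classes : {set {set T}} := [set cq_class v | v in T].

Definition cq_adj (C D : {set T}) : bool :=
  (C != D) && [exists x in C, exists y in D, e x y].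

Definition cq_deg (C : {set T}) : nat := #|[set D in cq_classes | cq_adj C D]|.

Definition cq_Delta : nat := \max_(C in cq_classes) cq_deg C.

Definition cq_omega : nat :=
  \max_(K | is_maxclique K) #|[set C in cq_classes | [exists v in K, v \in C]]|.

Definition cideg : nat :=
  \max_(v : T) #|[set K | is_maxclique K & v \in K]|.

End CliqueQuotient.

(* Main.v *)
Require Import Defs.
From mathcomp Require Import all_boot.
Set Implicit Arguments. Unset Strict Implicit. Unset Printing Implicit Defensive.

Section Proofs.
Variables (T : finType) (e : rel T).
Hypotheses (esym : symmetric e) (eirr : irreflexive e).

Lemma eqv_refl x : cq_equiv e x x.
Proof. by apply/forallP => K; apply/implyP. Qed.

Lemma eqv_sym x y : cq_equiv e x y -> cq_equiv e y x.
Proof.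
move/forallP=> H; apply/forallP => K; apply/implyP=> HK.
by have /implyP/(_ HK)/eqP -> := H K.
Qed.

Lemma eqv_trans x y z : cq_equiv e x y -> cq_equiv e y z -> cq_equiv e x z.
Proof.
move/forallP=> H1 /forallP H2; apply/forallP => K; apply/implyP=> HK.
have /implyP/(_ HK)/eqP -> := H1 K.
by have /implyP/(_ HK)/eqP -> := H2 K.
Qed.

Lemma eqv_mem K x y : is_maxclique e K -> cq_equiv e y x -> x \in K -> y \in K.
Proof.
move=> HK /forallP/(_ K)/implyP/(_ HK)/eqP ->. done.
Qed.

Lemma in_class x v : (x \in cq_class e v) = cq_equiv e x v.
Proof. by rewrite inE. Qed.

Lemma class_eq u v : cq_equiv e u v -> cq_class e u = cq_class e v.
Proof.
move=> H; apply/setP => x; rewrite !in_class; apply/idP/idP => Hx.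

exact: eqv_trans Hx H.
exact: eqv_trans Hx (eqv_sym H).
Qed.

Lemma classes_meet C D x :
  C \in cq_classes e -> D \in cq_classes e -> x \in C -> x \in D -> C = D.
Proof.
move=> /imsetP[u _ ->] /imsetP[w _ ->]; rewrite !in_class => H1 H2.
by rewrite -(class_eq H1) -(class_eq H2).
Qed.

Lemma clique2 x y : e x y -> is_clique e [set x; y].
Proof.
move=> exy; apply/forallP => a; apply/implyP; rewrite !inE => Ha.
apply/forallP => b; apply/implyP; rewrite !inE => Hb.
case/orP: Ha => /eqP -> ; case/orP: Hb => /eqP -> //; rewrite ?eqxx //.
  by rewrite exy implybT. by rewrite esym exy implybT.
Qed.

Lemma card_bigcup_leq (I : finType) (P : pred I) (F : I -> {set {set T}}) :
  #|\bigcup_(i | P i) F i| <= \sum_(i | P i) #|F i|.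
Proof.
apply: (big_rec2 (fun (S : {set {set T}}) (n : nat) => #|S| <= n)).
  by rewrite cards0.
move=> i S n _ Hn; apply: leq_trans (leq_card_setU _ _) _.
by rewrite leq_add2l.
Qed.

Lemma part1 : cq_Delta e <= cideg e * cq_omega e.
Proof.
apply/bigmax_leqP => C /imsetP[v _ ->].
pose KS := [set K | is_maxclique e K & v \in K].
pose S (K : {set T}) := [set C in cq_classes e | [exists w in K, w \in C]].
apply: (@leq_trans #|\bigcup_(K in KS) S K|).
  apply: subset_leq_card; apply/subsetP => D; rewrite inE => /andP[HD].
  case/andP=> _ /existsP[x /andP[Hx /existsP[y /andP[Hy exy]]]].
  have [K HK sub] := maxset_exists (clique2 exy).
  have xK : x \in K by apply: (subsetP sub); rewrite !inE eqxx.
  have yK : y \in K by apply: (subsetP sub); rewrite !inE eqxx orbT.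
  apply/bigcupP; exists K.
    rewrite inE; apply/andP; split=> //; apply: (eqv_mem HK _ xK).
    by apply: eqv_sym; rewrite -in_class.
  by rewrite inE HD; apply/existsP; exists y; rewrite yK.
apply: leq_trans (card_bigcup_leq _ _) _.
apply: (@leq_trans (\sum_(K in KS) cq_omega e)).
  apply: leq_sum => K; rewrite inE => /andP[HK _].
  exact: (@leq_bigmax_cond _ _ (fun K => #|S K|) K HK).
rewrite sum_nat_const; apply: leq_mul => //.
exact: (@leq_bigmax_cond _ xpredT (fun v => #|[set K | is_maxclique e K & v \in K]|) v).
Qed.

Lemma part2a : cq_omega e <= (cq_Delta e).+1.
Proof.
apply/bigmax_leqP => K HK.
set S := [set C in cq_classes e | [exists w in K, w \in C]].
have [S0|[C0 HC0]] := set_0Vmem S; first by rewrite S0 cards0.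
rewrite (cardsD1 C0) HC0 add1n ltnS.
have HC0' := HC0; rewrite inE in HC0'; case/andP: HC0' => C0c /existsP[w0 /andP[w0K w0C]].
apply: (@leq_trans (cq_deg e C0)); last exact: (@leq_bigmax_cond _ (fun C => C \in cq_classes e) (cq_deg e) C0 C0c).
apply: subset_leq_card; apply/subsetP => D; rewrite !inE => /andP[DC0 /andP[Dc /existsP[w /andP[wK wD]]]].
rewrite Dc /cq_adj eq_sym DC0 /=.
apply/existsP; exists w0; rewrite w0C /=; apply/existsP; exists w; rewrite wD /=.
have nw : w0 != w.
  apply/eqP => E; subst w; move/eqP: DC0; apply.
  exact: classes_meet Dc C0c wD w0C.
have /forallP/(_ w0)/implyP/(_ w0K)/forallP/(_ w)/implyP/(_ wK)/implyP := maxsetp HK.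
by apply.
Qed.

Lemma part2b : cideg e <= 2 ^ cq_Delta e.
Proof.
apply/bigmax_leqP => v _.
set KS := [set K | is_maxclique e K & v \in K].
set N := [set D in cq_classes e | cq_adj e (cq_class e v) D].
pose f (K : {set T}) := [set D in N | D \subset K].
have vc : cq_class e v \in cq_classes e by apply: imset_f.
have inj : {in KS &, injective f}.
  suff sub : forall K1 K2, K1 \in KS -> K2 \in KS -> f K1 = f K2 -> K1 \subset K2.
    by move=> K1 K2 H1 H2 E; apply/eqP; rewrite eqEsubset !sub.
  move=> K1 K2; rewrite !inE => /andP[H1 v1] /andP[H2 v2] E.
  apply/subsetP => x xK1.
  case Hxv: (cq_equiv e x v); first exact: eqv_mem H2 Hxv v2.
  have DK1 : cq_class e x \subset K1.
    by apply/subsetP => y; rewrite in_class => Hy; exact: eqv_mem H1 Hy xK1.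
  have DN : cq_class e x \in N.
    rewrite inE imset_f //= /cq_adj; apply/andP; split.
      apply/eqP => E'; move: (eqv_refl x); rewrite -in_class -E' in_class Hxv //.
    apply/existsP; exists v; rewrite in_class eqv_refl /=.
    apply/existsP; exists x; rewrite in_class eqv_refl /=.
    have nv : v != x by apply/eqP => E'; subst x; rewrite eqv_refl in Hxv.
    have /forallP/(_ v)/implyP/(_ v1)/forallP/(_ x)/implyP/(_ xK1)/implyP := maxsetp H1.
    by apply.
  have : cq_class e x \in f K2 by rewrite -E inE DN DK1.
  rewrite inE => /andP[_ /subsetP]; apply; by rewrite in_class eqv_refl.
rewrite -(card_in_imset inj).
apply: (@leq_trans #|powerset N|).
  apply: subset_leq_card; apply/subsetP => X /imsetP[K _ ->].
  by rewrite inE; apply/subsetP => D; rewrite inE => /andP[].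
rewrite card_powerset leq_pexp2l //.
exact: (@leq_bigmax_cond _ (fun C => C \in cq_classes e) (cq_deg e) _ vc).
Qed.

End Proofs.

Theorem corollary3p5 :
  exists f g : nat -> nat,
    forall (T : finType) (e : rel T),
      symmetric e -> irreflexive e ->
      cq_Delta e <= f (maxn (cideg e) (cq_omega e)) /\
      maxn (cideg e) (cq_omega e) <= g (cq_Delta e).
Proof.
exists (fun k => k * k), (fun d => 2 ^ d + d.+1) => T e Hs Hi; split.
  apply: leq_trans (part1 Hs) _.
  by apply: leq_mul; rewrite ?leq_maxl ?leq_maxr.
rewrite geq_max; apply/andP; split.
  exact: leq_trans (part2b e) (leq_addr _ _).
exact: leq_trans (part2a e) (leq_addl _ _).
Qed.
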